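(* Let $L$ be an infinite set and consider the edgeless cube $Q_L$. There is a basic sequence $s$ that is convergent over $f_{\mathrm{solved}}$ whose concatenation with itself ($s$ followed by $s$) is not convergent over $f_{\mathrm{solved}}$. In particular, the basic sequences convergent over $f_{\mathrm{solved}}$ are not closed under concatenation.
   Context: Let $L$ be an infinite set, $-L=\{-r:r\in L\}$ a disjoint copy of $L$, and $0$ a new element; $L^\dagger=-L\cup\{0\}\cup L$ with $-(-r)=r$, $-0=0$. Adjoin $\pm\infty$ with $-(+\infty)=-\infty$ and set $\bar L^\dagger=L^\dagger\cup\{\pm\infty\}$. Points of $U=(\bar L^\dagger)^3$ have coordinates $x,y,z$. The edgeless cube $Q_L$ is the set of cells: points of $U$ with exactly one coordinate in $\{\pm\infty\}$. For $i\in\{x,y,z\}$, $\alpha\in\bar L^\dagger$, the quarter-turn twist $T_{i,\alpha}$ is the permutation of cells fixing every cell $p$ with $p_i\ne\alpha$ and acting on the others by $T_{x,\alpha}(\alpha,y,z)=(\alpha,-z,y)$, $T_{y,\alpha}(x,\alpha,z)=(z,\alpha,-x)$, $T_{z,\alpha}(x,y,\alpha)=(-y,x,\alpha)$. Basic twists are $T,T^2,T^3$ for quarter-turn twists $T$. A basic sequence is a sequence $\langle\sigma_\eta:\eta<\theta\rangle$ of basic twists of ordinal length $\theta$. A configuration is a map $f$ from cells to the six colors red, white, green, orange, yellow, blue together with a special value NaC; it is legal if it never takes value NaC. The solved configuration $f_{\mathrm{solved}}$ colors a cell red, blue, white, orange, green, yellow according as $x=+\infty$, $y=+\infty$, $z=+\infty$,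 $x=-\infty$, $y=-\infty$, $z=-\infty$. A twist $\sigma$ acts by $(\sigma f)(c)=f(\sigma^{-1}c)$. Applying $\langle\sigma_\eta:\eta<\theta\rangle$ to $f_0$ produces $f_{\eta+1}=\sigma_\eta f_\eta$, and for limit $\lambda\le\theta$, $f_\lambda(c)$ is the eventually constant value of $f_\eta(c)$ ($\eta<\lambda$) if it exists and NaC otherwise; $f_\theta$ is the terminal configuration. The sequence is convergent over $f_0$ if $f_\theta$ is legal. *)

(* Defs.v *)
From Stdlib Require Import ClassicalEpsilon List.
Set Implicit Arguments.

Inductive Ldag (L : Type) : Type := LNeg (r : L) | LZero | LPos (r : L).
Arguments LZero {L}.

Definition ldneg {L : Type} (a : Ldag L) : Ldag L :=
  match a with LNeg r => LPos r | LZero => LZero | LPos r => LNeg r end.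

Inductive Lbar (L : Type) : Type := Fin (a : Ldag L) | PInf | MInf.
Arguments PInf {L}.
Arguments MInf {L}.

Definition lbneg {L : Type} (a : Lbar L) : Lbar L :=
  match a with Fin b => Fin (ldneg b) | PInf => MInf | MInf => PInf end.

Definition point (L : Type) : Type := (Lbar L * Lbar L * Lbar L)%type.

Definition is_inf {L : Type} (a : Lbar L) : bool :=
  match a with Fin _ => false | _ => true end.

Definition b2n (b : bool) : nat := if b then 1 else 0.

Definition is_cell {L : Type} (p : point L) : Prop :=
  let '(x, y, z) := p in
  (b2n (is_inf x) + b2n (is_inf y) + b2n (is_inf z) = 1)%nat.

Inductive axis : Type := AxX | AxY | AxZ.

Definition coord {L : Type} (i : axis) (p : point L) : Lbar L :=
  let '(x, y, z) := p in match i with AxX => x | AxY => y | AxZ => z end.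

(* classical decision of equality (L is an arbitrary set) *)
Definition lbar_eqb {L : Type} (a b : Lbar L) : bool :=
  if excluded_middle_informative (a = b) then true else false.

Definition quarter {L : Type} (i : axis) (al : Lbar L) (p : point L) : point L :=
  if lbar_eqb (coord i p) al then
    let '(x, y, z) := p in
    match i with
    | AxX => (x, lbneg z, y)
    | AxY => (z, y, lbneg x)
    | AxZ => (lbneg y, x, z)
    end
  else p.

Definition quarter_inv {L : Type} (i : axis) (al : Lbar L) (p : point L) : point L :=
  if lbar_eqb (coord i p) al then
    let '(x, y, z) := p in
    match i with
    | AxX => (x, z, lbneg y)
    | AxY => (lbneg z, y, x)
    | AxZ => (y, lbneg x, z)
    end
  else p.

Inductive qpow : Type := Q1 | Q2 | Q3.
Definition qpow_nat (k : qpow) : nat := match k with Q1 => 1 | Q2 => 2 | Q3 => 3 end.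

Record btwist (L : Type) : Type := BT {
  bt_axis : axis;
  bt_level : Lbar L;
  bt_pow : qpow }.

Definition btwist_inv {L : Type} (s : btwist L) (p : point L) : point L :=
  Nat.iter (qpow_nat (bt_pow s)) (quarter_inv (bt_axis s) (bt_level s)) p.

Inductive color : Type := Red | White | Green | Orange | Yellow | Blue.
Inductive cval : Type := Col (c : color) | NaC.

(* configurations are defined on all of U; only their values on cells matter
   (twists preserve cells, and legality only looks at cells). *)
Definition config (L : Type) : Type := point L -> cval.

Definition legal {L : Type} (f : config L) : Prop :=
  forall p : point L, is_cell p -> f p <> NaC.

Definition f_solved {L : Type} : config L :=
  fun p => let '(x, y, z) := p in
  match x, y, z with
  | PInf, Fin _, Fin _ => Col Red
  | Fin _, PInf, Fin _ => Col Blue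
  | Fin _, Fin _, PInf => Col White
  | MInf, Fin _, Fin _ => Col Orange
  | Fin _, MInf, Fin _ => Col Green
  | Fin _, Fin _, MInf => Col Yellow
  | _, _, _ => NaC
  end.

Definition act {L : Type} (s : btwist L) (f : config L) : config L :=
  fun c => f (btwist_inv s c).

(* Basic sequences of ordinal length: a family of basic twists indexed by a
   (strictly) well-ordered type (isomorphic to a unique ordinal theta). *)
Record bseq (L : Type) : Type := BSeq {
  bs_idx : Type;
  bs_lt : bs_idx -> bs_idx -> Prop;
  bs_tw : bs_idx -> btwist L }.

Definition strict_wellorder {I : Type} (R : I -> I -> Prop) : Prop :=
  (forall a, ~ R a a) /\
  (forall a b c, R a b -> R b c -> R a c) /\
  (forall a b, R a b \/ a = b \/ R b a) /\
  well_founded R.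

Definition concat_lt {I J : Type} (R : I -> I -> Prop) (S : J -> J -> Prop)
  (u v : I + J) : Prop :=
  match u, v with
  | inl a, inl b => R a b
  | inl _, inr _ => True
  | inr _, inl _ => False
  | inr a, inr b => S a b
  end.

Definition bconcat {L : Type} (s t : bseq L) : bseq L :=
  @BSeq L (bs_idx s + bs_idx t)%type (concat_lt (@bs_lt L s) (@bs_lt L t))
    (fun u => match u with inl a => bs_tw s a | inr b => bs_tw t b end).

(* stages eta <= theta: Some a = stage a (< theta), None = theta *)
Definition stage_lt {I : Type} (R : I -> I -> Prop) (u v : option I) : Prop :=
  match u, v with
  | Some a, Some b => R a b
  | Some _, None => True
  | None, _ => False
  end.

Definition is_run {L : Type} (s : bseq L) (f0 : config L)
  (F : option (bs_idx s) -> config L) : Prop :=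
  let lt := stage_lt (@bs_lt L s) in
  forall x : option (bs_idx s),
    (* stage 0 *)
    ((forall y, ~ lt y x) -> F x = f0) /\
    (* successor stage a+1 *)
    (forall a, lt (Some a) x -> (forall y, ~ (lt (Some a) y /\ lt y x)) ->
       F x = act (bs_tw s a) (F (Some a))) /\
    (* limit stage *)
    ((exists y, lt y x) ->
     (forall a, lt (Some a) x -> exists y, lt (Some a) y /\ lt y x) ->
     forall c,
       let evconst v := exists y, lt y x /\
           forall z, (lt y z \/ y = z) -> lt z x -> F z c = v in
       (forall v, evconst v -> F x c = v) /\
       ((~ exists v, evconst v) -> F x c = NaC)).

Definition terminal {L : Type} (s : bseq L) (f0 g : config L) : Prop :=
  exists F, is_run s f0 F /\ F None = g.

Definition convergent {L : Type} (s : bseq L) (f0 : config L) : Prop :=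
  exists g, terminal s f0 g /\ legal g.

Definition infinite_type (L : Type) : Prop :=
  ~ exists l : list L, forall x : L, In x l.

(* Main.v *)
Require Import Defs.
From Stdlib Require Import List.
From Stdlib Require Import Arith Lia ClassicalEpsilon FunctionalExtensionality.

Section M.
Variable L : Type.

Lemma lbar_eqb_refl (a : Lbar L) : lbar_eqb a a = true.
Proof. unfold lbar_eqb; destruct excluded_middle_informative; congruence. Qed.
Lemma lbar_eqb_ne (a b : Lbar L) : a <> b -> lbar_eqb a b = false.
Proof. unfold lbar_eqb; destruct excluded_middle_informative; congruence. Qed.
Lemma lbar_eqb_true (a b : Lbar L) : lbar_eqb a b = true -> a = b.
Proof. unfold lbar_eqb; destruct excluded_middle_informative; congruence. Qed.

Definition Tz : btwist L := BT AxZ PInf Q1.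
Definition Px : btwist L := BT AxX (Fin LZero) Q1.
Definition twI (i : option nat) : btwist L := match i with Some _ => Tz | None => Px end.
Definition s0 : bseq L := @BSeq L (option nat) (stage_lt Nat.lt) twI.

Definition S0 : config L := f_solved.

Lemma actTz_S : act Tz S0 = S0.
Proof.
  apply functional_extensionality; intros [[x y] z].
  unfold act, btwist_inv, S0; simpl; unfold quarter_inv; simpl.
  destruct (lbar_eqb z PInf) eqn:E; [|reflexivity].
  apply lbar_eqb_true in E; subst.
  destruct x as [[]| |], y as [[]| |]; reflexivity.
Qed.

Definition g0 : config L := act Px S0.

Lemma g0_legal : legal g0.
Proof.
  intros [[x y] z] Hc; unfold g0, act, btwist_inv, S0; simpl; unfold quarter_inv; simpl.
  destruct (lbar_eqb x (Fin LZero)) eqn:E;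
  destruct x as [[]| |], y as [[]| |], z as [[]| |]; simpl in *; try discriminate; try lia.
Qed.

Definition gz (n : nat) : config L := Nat.iter n (act Tz) g0.

Definition evc (c : point L) (v : cval) := exists N, forall m, N <= m -> gz m c = v.

Definition hh (c : point L) : cval :=
  match excluded_middle_informative (exists v, evc c v) with
  | left H => proj1_sig (constructive_indefinite_description _ H)
  | right _ => NaC end.

Lemma evc_unique c v w : evc c v -> evc c w -> v = w.
Proof.
  intros [N HN] [M HM]. rewrite <- (HN (N + M)) by lia. apply HM; lia.
Qed.

Lemma hh_1 c v : evc c v -> hh c = v.
Proof.
  intros H; unfold hh; destruct excluded_middle_informative as [e|n].
  - destruct (constructive_indefinite_description _ e) as [w Hw]; simpl.
    eapply evc_unique; eauto.
  - exfalso; apply n; eauto.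
Qed.

Lemma hh_2 c : ~ (exists v, evc c v) -> hh c = NaC.
Proof. intros H; unfold hh; destruct excluded_middle_informative; tauto. Qed.

Definition F1 (x : option (option nat)) : config L :=
  match x with None => g0 | Some _ => S0 end.

Lemma run1 : is_run s0 S0 F1.
Proof.
  unfold is_run; cbv zeta; simpl.
  intros [i|]; split; [|split| |split].
  - intros _; reflexivity.
  - intros a Ha _. destruct a as [a|]; simpl in Ha.
    + simpl. rewrite actTz_S; reflexivity.
    + destruct i; contradiction.
  - intros [y0 Hy0] _ c; split.
    + intros v [y [Hy Hz]]. destruct y as [y|]; [|contradiction].
      specialize (Hz (Some y) (or_intror eq_refl) Hy); exact Hz.
    + intros Hn; exfalso; apply Hn. exists (S0 c).
      exists y0; split; [exact Hy0|]. intros z _ Hz. destruct z; [reflexivity|contradiction].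
  - intros H; exfalso; apply (H (Some None)); simpl; exact I.
  - intros a _ Hb. destruct a as [a|].
    + exfalso; apply (Hb (Some None)); simpl; tauto.
    + reflexivity.
  - intros _ Hl; exfalso. destruct (Hl None I) as [y [Hy1 Hy2]]. destruct y as [[y|]|]; simpl in *; tauto.
Qed.

Definition F2 (x : option (option nat + option nat)) : config L :=
  match x with
  | Some (inl _) => S0
  | Some (inr (Some n)) => gz n
  | Some (inr None) => hh
  | None => act Px hh
  end.

Lemma run2 : is_run (bconcat s0 s0) S0 F2.
Proof.
  unfold is_run; cbv zeta; simpl.
  intros [[i|[k|]]|]; split; [|split| |split| |split| |split].
  - intros _; reflexivity.
  - intros a Ha _. destruct a as [[a|]|a]; simpl in Ha.
    + simpl. rewrite actTz_S; reflexivity.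
    + destruct i; contradiction.
    + contradiction.
  - intros [y0 Hy0] _ c; split.
    + intros v [y [Hy Hz]]. destruct y as [[y|y]|]; try (simpl in Hy; contradiction).
      specialize (Hz (Some (inl y)) (or_intror eq_refl) Hy); exact Hz.
    + intros Hn; exfalso; apply Hn. exists (S0 c).
      exists y0; split; [exact Hy0|]. intros z _ Hz.
      destruct z as [[z|z]|]; simpl in Hz; try contradiction; reflexivity.
  - intros H; exfalso; apply (H (Some (inl None))); simpl; exact I.
  - intros a Ha Hb. destruct k as [|k].
    + destruct a as [[a|]|[a|]]; simpl in Ha.
      * exfalso; apply (Hb (Some (inl None))); simpl; tauto.
      * reflexivity.
      * lia.
      * contradiction.
    + destruct a as [a|[a|]]; simpl in Ha.
      * exfalso; apply (Hb (Some (inr (Some 0)))); simpl; split; [tauto|lia].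
      * destruct (Nat.eq_dec a k) as [->|Hne]; [reflexivity|].
        exfalso; apply (Hb (Some (inr (Some (S a))))); simpl; lia.
      * contradiction.
  - intros _ Hl; exfalso. destruct k as [|k].
    + destruct (Hl (inl None) I) as [y [Hy1 Hy2]].
      destruct y as [[[y|]|[y|]]|]; simpl in *; try tauto; lia.
    + destruct (Hl (inr (Some k)) ltac:(simpl; lia)) as [y [Hy1 Hy2]].
      destruct y as [[[y|]|[y|]]|]; simpl in *; try tauto; lia.
  - intros H; exfalso; apply (H (Some (inl None))); simpl; exact I.
  - intros a Ha Hb; exfalso. destruct a as [a|[a|]]; simpl in Ha.
    + apply (Hb (Some (inr (Some 0)))); simpl; tauto.
    + apply (Hb (Some (inr (Some (S a))))); simpl; split; [lia|exact I].
    + contradiction.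
  - intros _ _ c; split.
    + intros v Hv. apply hh_1. destruct Hv as [y [Hy Hz]].
      destruct y as [[y|[y|]]|]; simpl in Hy; try contradiction.
      * exists 0; intros m _. apply (Hz (Some (inr (Some m)))); simpl; tauto.
      * exists y; intros m Hm. apply (Hz (Some (inr (Some m)))); simpl; [|tauto].
        destruct (Nat.eq_dec y m) as [->|]; [right; reflexivity|left; lia].
    + intros Hn. apply hh_2. intros [v [N HN]]. apply Hn. exists v.
      exists (Some (inr (Some N))); split; [simpl; tauto|].
      intros z Hz1 Hz2. destruct z as [[z|[z|]]|]; simpl in Hz1, Hz2; try contradiction.
      * destruct Hz1 as [[]|H]; discriminate.
      * apply HN. destruct Hz1 as [H|H]; [lia|injection H; lia].
  - intros H; exfalso; apply (H (Some (inl None))); simpl; exact I.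
  - intros a _ Hb. destruct a as [a|[a|]].
    + exfalso; apply (Hb (Some (inr None))); simpl; tauto.
    + exfalso; apply (Hb (Some (inr None))); simpl; tauto.
    + reflexivity.
  - intros _ Hl; exfalso. destruct (Hl (inr None) I) as [y [Hy1 Hy2]].
    destruct y as [[[y|]|[y|]]|]; simpl in *; tauto.
Qed.


Lemma wo : strict_wellorder (stage_lt Nat.lt).
Proof.
  split; [|split; [|split]].
  - intros [a|]; simpl; lia.
  - intros [a|] [b|] [c|]; simpl; try tauto; lia.
  - intros [a|] [b|]; simpl; try tauto.
    destruct (Nat.lt_total a b) as [H|[H|H]]; [left|right;left;f_equal|right;right]; auto.
  - assert (HS : forall n, Acc (stage_lt Nat.lt) (Some n)).
    { intros n; induction n as [n IH] using lt_wf_ind. constructor.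
      intros [m|] Hm; simpl in Hm; [apply IH; exact Hm|contradiction]. }
    intros [n|]; [apply HS|]. constructor. intros [m|] Hm; [apply HS|contradiction].
Qed.

Lemma qz x y : btwist_inv Tz (x, y, PInf) = (y, lbneg x, PInf).
Proof. unfold btwist_inv; simpl; unfold quarter_inv; simpl; rewrite lbar_eqb_refl; reflexivity. Qed.

Definition colp (m : nat) : cval := if Nat.even m then Col White else Col Blue.

Lemma gz_par (r : L) : forall m,
  gz m (Fin (LPos r), Fin LZero, PInf) = colp m /\ gz m (Fin LZero, Fin (LNeg r), PInf) = colp (S m) /\ gz m (Fin (LNeg r), Fin LZero, PInf) = colp m /\ gz m (Fin LZero, Fin (LPos r), PInf) = colp (S m).
Proof.
  induction m as [|m IH].
  - unfold gz, colp; simpl; unfold g0, act, btwist_inv; simpl; unfold quarter_inv; simpl.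
    rewrite !lbar_eqb_refl, !lbar_eqb_ne by discriminate. simpl. repeat split.
  - destruct IH as (H0 & H1 & H2 & H3).
    change (gz (S m)) with (act Tz (gz m)); unfold act at 1 2 3 4.
    rewrite !qz; simpl. rewrite H0, H1, H2, H3.
    unfold colp; simpl. repeat split.
Qed.

End M.

Theorem mainTheorem10 (L : Type) (HL : infinite_type L) :
  exists s : bseq L,
    strict_wellorder (bs_lt s) /\
    convergent s f_solved /\
    exists g : config L, terminal (bconcat s s) f_solved g /\ ~ legal g.
Proof.
  assert (r : L).
  { destruct (excluded_middle_informative (exists r : L, True)) as [e|n].
    - exact (proj1_sig (constructive_indefinite_description _ e)).
    - exfalso; apply HL; exists nil; intros x; apply n; exists x; exact I. }
  exists (s0 L); split; [apply wo|split].
  - exists (g0 L); split; [|apply g0_legal].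
    exists (F1 L); split; [apply run1|reflexivity].
  - exists (act (Px L) (hh L)); split.
    + exists (F2 L); split; [apply run2|reflexivity].
    + intros Hl. apply (Hl (Fin (LPos r), Fin LZero, PInf)); [reflexivity|].
      unfold act, btwist_inv; simpl; unfold quarter_inv; simpl.
      rewrite lbar_eqb_ne by discriminate.
      apply hh_2. intros [v [N HN]].
      destruct (gz_par L r (2 * N)) as [A _].
      destruct (gz_par L r (S (2 * N))) as [B _].
      rewrite HN in A by lia. rewrite HN in B by lia.
      unfold colp in A, B. rewrite Nat.even_succ, <- Nat.negb_even in B.
      rewrite Nat.even_mul in A, B. simpl in A, B. congruence.
Qed.
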